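(* Let $f:[0,1]\to[0,1]$ be a surjective continuous function that does not admit a splitting sequence. Let $F$ be the set of fixed points of $f$ and let $d$ be an accumulation point of $F$. Then $$\varprojlim f=\varprojlim([0,d],f|_{[0,d]})\cup\varprojlim([d,1],f|_{[d,1]})$$ and $$\varprojlim([0,d],f|_{[0,d]})\cap\varprojlim([d,1],f|_{[d,1]})=\{(d,d,\dots)\}.$$
   Context: $\varprojlim f=\{\mathbf x=(x_0,x_1,\dots)\in[0,1]^{\mathbb N}: f(x_{n+1})=x_n\ \forall n\}$ with the product topology. For a closed interval $J\subseteq[0,1]$, $\varprojlim(J,f|_J)=\{\mathbf x\in\varprojlim f: x_n\in J\text{ for all }n\}$. A sequence $(T_n)_{n\in\mathbb N}$ of closed intervals $T_n\subsetneq[0,1]$ (possibly degenerate) is tight if $f(T_{n+1})=T_n$ for every $n$ and $T_n$ is nondegenerate for all sufficiently large $n$. A tight sequence $(T_n)$, $T_n=[l_n,r_n]$, is a splitting sequence admitted by $f$ if there are an infinite set $N\subseteq\mathbb N$ and nondegenerate closed intervals $S_n\subseteq[0,1]$ ($n\in N$) with $S_n\cap T_n\subseteq\{l_n,r_n\}$ and $f(S_n)=f(T_n)$ for all $n\in N$. *)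

(* Defs.v *)
From Stdlib Require Import Reals Lra.
Open Scope R_scope.

Definition inI (a b x : R) : Prop := a <= x /\ x <= b.

Definition maps_unit (f : R -> R) : Prop := forall x, inI 0 1 x -> inI 0 1 (f x).

Definition cont_unit (f : R -> R) : Prop :=
  forall x, inI 0 1 x -> forall eps, 0 < eps ->
    exists delta, 0 < delta /\
      forall y, inI 0 1 y -> Rabs (y - x) < delta -> Rabs (f y - f x) < eps.

Definition surj_unit (f : R -> R) : Prop :=
  forall y, inI 0 1 y -> exists x, inI 0 1 x /\ f x = y.

Definition image_eq (f : R -> R) (a b c d : R) : Prop :=
  forall y, inI c d y <-> exists x, inI a b x /\ f x = y.

Definition inv_lim (f : R -> R) (x : nat -> R) : Prop :=
  (forall n, inI 0 1 (x n)) /\ (forall n, f (x (S n)) = x n).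

Definition inv_lim_J (f : R -> R) (a b : R) (x : nat -> R) : Prop :=
  inv_lim f x /\ forall n, inI a b (x n).

(* A tight sequence T_n = [l n, r n] of closed (possibly degenerate) intervals
   properly contained in [0,1] *)
Definition tight (f : R -> R) (l r : nat -> R) : Prop :=
  (forall n, 0 <= l n /\ l n <= r n /\ r n <= 1 /\ ~ (l n = 0 /\ r n = 1)) /\
  (forall n, image_eq f (l (S n)) (r (S n)) (l n) (r n)) /\
  (exists N, forall n, (N <= n)%nat -> l n < r n).

Definition splitting_sequence (f : R -> R) (l r : nat -> R) : Prop :=
  tight f l r /\
  exists P : nat -> Prop,
    (forall m, exists n, (m <= n)%nat /\ P n) /\   (* P is infinite *)
    forall n, P n ->
      exists a b, 0 <= a /\ a < b /\ b <= 1 /\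
        (forall x, inI a b x -> inI (l n) (r n) x -> x = l n \/ x = r n) /\
        (forall y, (exists x, inI a b x /\ f x = y) <->
                   (exists x, inI (l n) (r n) x /\ f x = y)).

Definition admits_splitting (f : R -> R) : Prop :=
  exists l r, splitting_sequence f l r.

Definition fixed_point (f : R -> R) (p : R) : Prop := inI 0 1 p /\ f p = p.

Definition accumulation_point (F : R -> Prop) (d : R) : Prop :=
  forall eps, 0 < eps -> exists p, F p /\ p <> d /\ Rabs (p - d) < eps.

(* Main.v *)
Require Import Defs.
From Stdlib Require Import Reals.
From Stdlib Require Import Lra Lia ClassicalEpsilon Classical FunctionalExtensionality.
Open Scope R_scope.

Definition cont_on (a b : R) (g : R -> R) : Prop :=
  forall x, inI a b x -> forall eps, 0 < eps ->
    exists delta, 0 < delta /\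
      forall y, inI a b y -> Rabs (y - x) < delta -> Rabs (g y - g x) < eps.

Lemma last_hit (g : R -> R) (a b y : R) :
  cont_on a b g -> a <= b -> g a <= y -> y < g b ->
  exists m, a <= m < b /\ g m = y /\ forall r, m < r <= b -> y < g r.
Proof.
  intros Hc Hab Ha Hb.
  set (E := fun t => a <= t <= b /\ g t <= y).
  assert (Hbd : bound E). { exists b. intros t [Ht _]. lra. }
  assert (Hne : exists t, E t). { exists a. unfold E. lra. }
  destruct (completeness E Hbd Hne) as [m [Hub Hlub]].
  assert (Ham : a <= m). { apply Hub. unfold E; lra. }
  assert (Hmb : m <= b). { apply Hlub. intros t [Ht _]. lra. }
  assert (Hle : g m <= y).
  { destruct (Rle_or_lt (g m) y) as [H|H]; [exact H|].
    exfalso.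
    destruct (Hc m (conj Ham Hmb) (g m - y)) as [dl [Hdl Hd]]; [lra|].
    assert (Hex : exists t, E t /\ m - dl < t).
    { apply not_all_not_ex. intro Hn.
      assert (m <= m - dl); [|lra].
      apply Hlub. intros t Ht. destruct (Rle_or_lt t (m - dl)) as [H1|H1]; [exact H1|].
      exfalso. apply (Hn t). split; assumption. }
    destruct Hex as [t [[Ht1 Ht2] Ht3]].
    assert (t <= m) by (apply Hub; split; assumption).
    assert (Hin : inI a b t) by (unfold inI; lra).
    assert (Habs : Rabs (t - m) < dl) by (apply Rabs_def1; lra).
    specialize (Hd t Hin Habs). apply Rabs_def2 in Hd. lra. }
  assert (Hmb' : m < b).
  { destruct Hmb as [H|H]; [exact H|]. rewrite H in Hle. lra. }
  assert (Hgt : forall r, m < r <= b -> y < g r).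
  { intros r Hr. destruct (Rle_or_lt (g r) y) as [H|H]; [|exact H].
    exfalso. assert (r <= m) by (apply Hub; unfold E; lra). lra. }
  exists m. split; [lra|]. split; [|exact Hgt].
  destruct (Rle_or_lt y (g m)) as [H|H]; [lra|]. exfalso.
  destruct (Hc m (conj Ham Hmb) (y - g m)) as [dl [Hdl Hd]]; [lra|].
  set (r := Rmin b (m + dl/2)).
  assert (Hr1 : m < r). { unfold r. apply Rmin_glb_lt; lra. }
  assert (Hr2 : r <= b) by apply Rmin_l.
  assert (Hr3 : r <= m + dl/2) by apply Rmin_r.
  assert (Hin : inI a b r) by (unfold inI; lra).
  assert (Habs : Rabs (r - m) < dl) by (apply Rabs_def1; lra).
  specialize (Hd r Hin Habs). apply Rabs_def2 in Hd.
  specialize (Hgt r (conj Hr1 Hr2)). lra.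
Qed.

Lemma cont_on_refl (g : R -> R) a b :
  cont_on a b g -> cont_on a b (fun t => - g (a + b - t)).
Proof.
  intros Hc x Hx eps He.
  assert (Hx' : inI a b (a + b - x)) by (unfold inI in *; lra).
  destruct (Hc _ Hx' eps He) as [dl [Hdl Hd]].
  exists dl. split; [exact Hdl|]. intros y Hy Hyx.
  assert (Hy' : inI a b (a + b - y)) by (unfold inI in *; lra).
  assert (Habs : Rabs ((a + b - y) - (a + b - x)) < dl).
  { replace ((a + b - y) - (a + b - x)) with (- (y - x)) by ring.
    rewrite Rabs_Ropp. exact Hyx. }
  specialize (Hd _ Hy' Habs).
  replace (- g (a + b - y) - - g (a + b - x)) with (- (g (a + b - y) - g (a + b - x))) by ring.
  rewrite Rabs_Ropp. exact Hd.
Qed.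

Lemma cont_on_aff (g : R -> R) a b k :
  cont_on a b g -> cont_on a b (fun t => k - g t).
Proof.
  intros Hc x Hx eps He.
  destruct (Hc _ Hx eps He) as [dl [Hdl Hd]].
  exists dl. split; [exact Hdl|]. intros y Hy Hyx.
  specialize (Hd _ Hy Hyx).
  replace (k - g y - (k - g x)) with (- (g y - g x)) by ring.
  rewrite Rabs_Ropp. exact Hd.
Qed.

Lemma cont_on_sub (g : R -> R) a b a' b' :
  cont_on a b g -> a <= a' -> b' <= b -> cont_on a' b' g.
Proof.
  intros Hc H1 H2 x Hx eps He.
  assert (Hx' : inI a b x) by (unfold inI in *; lra).
  destruct (Hc _ Hx' eps He) as [dl [Hdl Hd]].
  exists dl. split; [exact Hdl|]. intros y Hy Hyx.
  apply Hd; [unfold inI in *; lra| exact Hyx].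
Qed.

Lemma first_hit (g : R -> R) (a b e : R) :
  cont_on a b g -> a <= b -> g a < e -> e <= g b ->
  exists w, a < w <= b /\ g w = e /\ forall r, a <= r < w -> g r < e.
Proof.
  intros Hc Hab Ha Hb.
  destruct (last_hit (fun t => - g (a + b - t)) a b (- e) (cont_on_refl g a b Hc) Hab)
    as [m [Hm [Hgm Hr]]].
  { replace (a + b - a) with b by ring. lra. }
  { replace (a + b - b) with a by ring. lra. }
  exists (a + b - m). split; [lra|]. split; [lra|].
  intros r Hr'. specialize (Hr (a + b - r)). 
  replace (a + b - (a + b - r)) with r in Hr by ring.
  assert (H : - e < - g r) by (apply Hr; lra). lra.
Qed.

Lemma P1 (g : R -> R) a b c e :
  cont_on a b g -> a <= b -> g a <= c -> c < e -> e <= g b ->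
  exists s t, a <= s /\ s < t /\ t <= b /\ image_eq g s t c e.
Proof.
  intros Hc Hab Ha Hce Hb.
  destruct (first_hit g a b e Hc Hab) as [w [Hw [Hgw Hbef]]]; [lra|lra|].
  assert (Hcw : cont_on a w g) by (apply (cont_on_sub g a b); [exact Hc|lra|lra]).
  destruct (last_hit g a w c Hcw) as [s [Hs [Hgs Haft]]]; [lra|lra|lra|].
  exists s, w. split; [lra|]. split; [lra|]. split; [lra|].
  intro y. split.
  - intros [Hy1 Hy2]. destruct Hy2 as [Hy2|Hy2].
    + assert (Hcs : cont_on s w g) by (apply (cont_on_sub g a w); [exact Hcw|lra|lra]).
      destruct (last_hit g s w y Hcs) as [m [Hm [Hgm _]]]; [lra|lra|lra|].
      exists m. split; [unfold inI; lra| exact Hgm].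
    + exists w. split; [unfold inI; lra| lra].
  - intros [x [[Hx1 Hx2] Hfx]]. subst y. split.
    + destruct Hx1 as [Hx1|Hx1].
      * assert (c < g x) by (apply Haft; lra). lra.
      * subst x. lra.
    + destruct Hx2 as [Hx2|Hx2].
      * assert (g x < e) by (apply Hbef; lra). lra.
      * subst x. lra.
Qed.

Lemma P2 (g : R -> R) u v c e :
  cont_unit g -> inI 0 1 u -> inI 0 1 v -> g u <= c -> c < e -> e <= g v ->
  exists s t, s < t /\ ((u <= s /\ t <= v) \/ (v <= s /\ t <= u)) /\ image_eq g s t c e.
Proof.
  intros Hc Hu Hv Ha Hce Hb.
  destruct (Rtotal_order u v) as [H|[H|H]].
  - assert (Hcu : cont_on u v g) by (apply (cont_on_sub g 0 1); [exact Hc| apply Hu| apply Hv]).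
    destruct (P1 g u v c e Hcu) as [s [t [H1 [H2 [H3 H4]]]]]; try lra.
    exists s, t. split; [lra|]. split; [left; lra| exact H4].
  - subst v. lra.
  - assert (Hcu : cont_on v u g) by (apply (cont_on_sub g 0 1); [exact Hc| apply Hv| apply Hu]).
    destruct (P1 (fun t => (c + e) - g t) v u c e (cont_on_aff g v u _ Hcu)) as [s [t [H1 [H2 [H3 H4]]]]];
      try lra.
    exists s, t. split; [lra|]. split; [right; lra|].
    intro y. split.
    + intros Hy. assert (Hy' : inI c e (c + e - y)) by (unfold inI in *; lra).
      destruct (proj1 (H4 _) Hy') as [x [Hx Hgx]]. exists x. split; [exact Hx| lra].
    + intros [x [Hx Hgx]].
      assert (Hy' : inI c e (c + e - y)).
      { apply (proj2 (H4 _)). exists x. split; [exact Hx| lra]. }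
      unfold inI in *; lra.
Qed.

Lemma build_split (f : R -> R) p q a b u v :
  cont_unit f -> 0 <= p -> p < q -> q <= 1 -> f p = p -> f q = q -> ~ (p = 0 /\ q = 1) ->
  0 <= a -> b <= 1 -> (forall x, inI a b x -> inI p q x -> x = p \/ x = q) ->
  inI a b u -> inI a b v -> f u <= p -> q <= f v -> admits_splitting f.
Proof.
  intros Hc Hp Hpq Hq Hfp Hfq Hpq01 Ha Hb Hdisj Hu Hv Hfu Hfv.
  assert (Hcpq : cont_on p q f) by (apply (cont_on_sub f 0 1); [exact Hc|lra|lra]).
  assert (Hstep : forall ce : R * R, exists st : R * R,
    (p <= fst ce /\ fst ce < snd ce /\ snd ce <= q) ->
    (p <= fst st /\ fst st < snd st /\ snd st <= q /\
     image_eq f (fst st) (snd st) (fst ce) (snd ce))).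
  { intros [c e]. destruct (classic (p <= c /\ c < e /\ e <= q)) as [H|H].
    - simpl in H. destruct (P1 f p q c e Hcpq) as [s [t [H1 [H2 [H3 H4]]]]]; try lra.
      exists (s, t). intros _. simpl. auto.
    - exists (0, 0). intro H'. contradiction. }
  pose (step := fun ce => proj1_sig (constructive_indefinite_description _ (Hstep ce))).
  assert (Hspec : forall ce, (p <= fst ce /\ fst ce < snd ce /\ snd ce <= q) ->
    (p <= fst (step ce) /\ fst (step ce) < snd (step ce) /\ snd (step ce) <= q /\
     image_eq f (fst (step ce)) (snd (step ce)) (fst ce) (snd ce))).
  { intros ce Hce. unfold step.
    destruct (constructive_indefinite_description _ (Hstep ce)) as [st Hst]. simpl. exact (Hst Hce). }
  pose (T := fun n => Nat.iter n step (p, q)).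
  assert (HTS : forall n, T (S n) = step (T n)) by reflexivity.
  assert (Hinv : forall n, p <= fst (T n) /\ fst (T n) < snd (T n) /\ snd (T n) <= q).
  { induction n as [|n IH].
    - simpl. lra.
    - rewrite HTS. destruct (Hspec _ IH) as [H1 [H2 [H3 _]]]. auto. }
  exists (fun n => fst (T n)), (fun n => snd (T n)). split.
  - split; [|split].
    + intro n. destruct (Hinv n) as [H1 [H2 H3]]. split; [lra|]. split; [lra|]. split; [lra|].
      intros [H4 H5]. apply Hpq01. split; lra.
    + intro n. cbv beta. rewrite HTS. apply Hspec. apply Hinv.
    + exists 0%nat. intros n _. apply Hinv.
  - exists (fun n => (1 <= n)%nat). split.
    + intro m. exists (S m). split; lia.
    + intros n Hn. destruct n as [|k]; [lia|]. cbv beta.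
      destruct (Hinv k) as [Hk1 [Hk2 Hk3]].
      destruct (P2 f u v (fst (T k)) (snd (T k)) Hc) as [s [t [Hst [Hpos Him]]]];
        try (unfold inI in *; lra).
      destruct (Hspec _ (Hinv k)) as [_ [_ [_ HimT]]]. rewrite <- HTS in HimT.
      destruct (Hinv (S k)) as [HS1 [HS2 HS3]].
      exists s, t. split; [unfold inI in *; lra|]. split; [exact Hst|]. split; [unfold inI in *; lra|].
      split.
      * intros x Hx1 Hx2.
        assert (Hab : inI a b x) by (unfold inI in *; lra).
        assert (Hpqx : inI p q x) by (unfold inI in *; lra).
        destruct (Hdisj x Hab Hpqx) as [H|H]; unfold inI in *; [left|right]; lra.
      * intro y. split; intro H.
        -- apply (proj1 (HimT y)). apply (proj2 (Him y)). exact H.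
        -- apply (proj1 (Him y)). apply (proj2 (HimT y)). exact H.
Qed.

Lemma cross_split2 (f : R -> R) y p q :
  cont_unit f -> fixed_point f p -> fixed_point f q -> p < q -> inI 0 1 y ->
  ((y < p /\ q < f y) \/ (f y < p /\ q < y)) -> admits_splitting f.
Proof.
  intros Hc [[Hp0 Hp1] Hfp] [[Hq0 Hq1] Hfq] Hpq [Hy0 Hy1] [[H1 H2]|[H1 H2]].
  - apply (build_split f p q y p p y); try (unfold inI; lra); try assumption.
    intros x Hx Hx'. unfold inI in *. left; lra.
  - apply (build_split f p q q y y q); try (unfold inI; lra); try assumption.
    intros x Hx Hx'. unfold inI in *. right; lra.
Qed.

Lemma two_fixed (F : R -> Prop) d m :
  accumulation_point F d -> 0 < m ->
  exists p1 p2, F p1 /\ F p2 /\ p1 < p2 /\ d - m < p1 /\ p2 < d + m.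
Proof.
  intros Hacc Hm.
  destruct (Hacc m Hm) as [p1 [HF1 [Hne1 Ha]]].
  assert (Hpos : 0 < Rabs (p1 - d)) by (apply Rabs_pos_lt; lra).
  destruct (Hacc _ Hpos) as [p2 [HF2 [_ Hb]]].
  assert (Hb' : Rabs (p2 - d) < m) by lra.
  apply Rabs_def2 in Ha. apply Rabs_def2 in Hb'.
  destruct (Rtotal_order p1 p2) as [H|[H|H]].
  - exists p1, p2. repeat split; auto; lra.
  - subst p2. lra.
  - exists p2, p1. repeat split; auto; lra.
Qed.

Lemma cross_split (f : R -> R) d y :
  cont_unit f -> accumulation_point (fixed_point f) d -> inI 0 1 y ->
  ((y < d /\ d < f y) \/ (f y < d /\ d < y)) -> admits_splitting f.
Proof.
  intros Hc Hacc Hy [[H1 H2]|[H1 H2]].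
  - destruct (two_fixed _ d (Rmin (d - y) (f y - d)) Hacc) as [p [q [Hp [Hq [Hpq [Hl Hr]]]]]].
    { apply Rmin_glb_lt; lra. }
    pose proof (Rmin_l (d - y) (f y - d)). pose proof (Rmin_r (d - y) (f y - d)).
    apply (cross_split2 f y p q); auto. left; lra.
  - destruct (two_fixed _ d (Rmin (y - d) (d - f y)) Hacc) as [p [q [Hp [Hq [Hpq [Hl Hr]]]]]].
    { apply Rmin_glb_lt; lra. }
    pose proof (Rmin_l (y - d) (d - f y)). pose proof (Rmin_r (y - d) (d - f y)).
    apply (cross_split2 f y p q); auto. right; lra.
Qed.

Theorem corollary3p12 (f : R -> R) (d : R) :
  maps_unit f -> cont_unit f -> surj_unit f ->
  ~ admits_splitting f ->
  accumulation_point (fixed_point f) d ->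
  (forall x, inv_lim f x <-> (inv_lim_J f 0 d x \/ inv_lim_J f d 1 x)) /\
  (forall x, (inv_lim_J f 0 d x /\ inv_lim_J f d 1 x) <-> x = (fun _ => d)).
Proof.
  intros Hmap Hc Hs Hns Hacc.
  assert (Hd01 : inI 0 1 d).
  { split.
    - destruct (Rle_or_lt 0 d) as [H|H]; [exact H|]. exfalso.
      destruct (Hacc (- d)) as [p [[[Hp0 Hp1] _] [_ Hpd]]]; [lra|].
      apply Rabs_def2 in Hpd. lra.
    - destruct (Rle_or_lt d 1) as [H|H]; [exact H|]. exfalso.
      destruct (Hacc (d - 1)) as [p [[[Hp0 Hp1] _] [_ Hpd]]]; [lra|].
      apply Rabs_def2 in Hpd. lra. }
  assert (Hfd : f d = d).
  { assert (Hb : forall eps, 0 < eps -> f d - d < 2 * eps /\ - (2 * eps) < f d - d).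
    { intros eps He.
      destruct (Hc d Hd01 eps He) as [dl [Hdl Hd]].
      destruct (Hacc (Rmin dl eps)) as [p [[Hp Hfp] [_ Hpd]]].
      { apply Rmin_glb_lt; lra. }
      pose proof (Rmin_l dl eps). pose proof (Rmin_r dl eps).
      assert (Hpd' : Rabs (p - d) < dl) by lra.
      specialize (Hd p Hp Hpd'). rewrite Hfp in Hd.
      apply Rabs_def2 in Hd. apply Rabs_def2 in Hpd. lra. }
    destruct (Rtotal_order (f d) d) as [H|[H|H]].
    - destruct (Hb ((d - f d) / 3)) as [H1 H2]; lra.
    - exact H.
    - destruct (Hb ((f d - d) / 3)) as [H1 H2]; lra. }
  split.
  - intro x. split; [|intros [[H _]|[H _]]; exact H].
    intro Hx.
    destruct (classic (forall n, x n <= d)) as [Hle|Hle].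
    { left. split; [exact Hx|]. intro n. destruct Hx as [H01 _]. destruct (H01 n). split; auto. }
    destruct (classic (forall n, d <= x n)) as [Hge|Hge].
    { right. split; [exact Hx|]. intro n. destruct Hx as [H01 _]. destruct (H01 n). split; auto. }
    exfalso.
    apply not_all_ex_not in Hle as [i Hi]. apply Rnot_le_lt in Hi.
    apply not_all_ex_not in Hge as [j Hj]. apply Rnot_le_lt in Hj.
    assert (Hdown : forall n, x n <> d -> x (S n) <> d).
    { intros n H H'. apply H. rewrite <- (proj2 Hx n), H'. exact Hfd. }
    assert (Hcross : forall k n, (x n < d /\ d < x (n + k)%nat) \/ (d < x n /\ x (n + k)%nat < d) ->
      exists t, (x (S t) < d /\ d < x t) \/ (d < x (S t) /\ x t < d)).
    { induction k as [|k IH]; intros n H.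
      - rewrite Nat.add_0_r in H. lra.
      - assert (Hn : x n <> d) by lra.
        pose proof (Hdown n Hn) as HSn.
        replace (n + S k)%nat with (S n + k)%nat in H by lia.
        destruct (Rtotal_order (x (S n)) d) as [H1|[H1|H1]].
        + destruct (Rlt_or_le d (x n)) as [H2|H2].
          * exists n. left. lra.
          * apply (IH (S n)). lra.
        + contradiction.
        + destruct (Rlt_or_le (x n) d) as [H2|H2].
          * exists n. right. lra.
          * apply (IH (S n)). lra. }
    assert (Ht : exists t, (x (S t) < d /\ d < x t) \/ (d < x (S t) /\ x t < d)).
    { destruct (Compare_dec.le_lt_dec i j) as [Hij|Hij].
      - apply (Hcross (j - i)%nat i). right. replace (i + (j - i))%nat with j by lia. lra.
      - apply (Hcross (i - j)%nat j). left. replace (j + (i - j))%nat with i by lia. lra. }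
    destruct Ht as [t Ht].
    apply Hns. apply (cross_split f d (x (S t)) Hc Hacc).
    + apply (proj1 Hx).
    + rewrite (proj2 Hx t). lra.
  - intro x. split.
    + intros [[_ H1] [_ H2]]. apply functional_extensionality. intro n.
      destruct (H1 n), (H2 n). lra.
    + intros ->. destruct Hd01 as [H0 H1].
      repeat split; intros; cbv beta; try lra.
Qed.
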